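(* Let $\Omega=\{x\in\mathbb{R}^n: a_i^Tx\le b_i,\ i=1,\ldots,m\}$ be a polyhedral convex set with nonempty interior, and let $f:\mathbb{R}^n\to\mathbb{R}$ be continuously differentiable with $L$-Lipschitz continuous gradient ($L>0$) and bounded below on $\Omega$ by $f_{\mathrm{low}}$. Consider the direct-search algorithm described below and suppose that at every iteration $k$ the polling set $\mathcal{D}_k$ is a $\Lambda$-positive spanning set for $B(x_k,\alpha_k)\cap\Omega$ and satisfies $\|d\|\le d_{\max}\alpha_k$ for all $d\in\mathcal{D}_k$, where $\Lambda>0$, $d_{\max}>0$. If at iteration $k$ we have $\pi(x_k)\neq0$ and $\alpha_k<\min\left(\frac{2\pi(x_k)}{(Ld_{\max}^2+\sigma)\Lambda},1\right)$, then iteration $k$ is successful.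
   Context: $\|\cdot\|$ is the Euclidean norm, $B(y,r)=\{z:\|z-y\|\le r\}$. Criticality measure: for $x\in\Omega$, $\pi(x):=\left|\min_{v:\ x+v\in\Omega,\ \|v\|\le1}\nabla f(x)^Tv\right|$. Given $x\in\Omega$, $\alpha>0$, $\Lambda\ge0$, a set $\{d_1,\ldots,d_p\}\subset\mathbb{R}^n$ is a $\Lambda$-positive spanning set for $B(x,\alpha)\cap\Omega$ if $x+d_i\in\Omega$ for all $i$ and, for every $v\in\mathbb{R}^n$ with $x+v\in\Omega$ and $\|v\|\le\alpha$, there exists $c\in\mathbb{R}^p$ with $c\ge0$, $v=\sum_ic_id_i$ and $\|c\|_1\le\Lambda$. The algorithm: inputs $x_0\in\Omega$, $\alpha_{\max}>0$, $\alpha_0\in(0,\alpha_{\max}]$, $\sigma>0$, $0<\gamma_{\mathrm{dec}}<1<\gamma_{\mathrm{inc}}$. For $k=0,1,2,\ldots$: compute a finite polling set $\mathcal{D}_k\subset\mathbb{R}^n$; if there exists $d_k\in\mathcal{D}_k$ with $x_k+d_k\in\Omega$ and $f(x_k+d_k)<f(x_k)-\frac{\sigma}{2}\alpha_k^2$, set $x_{k+1}=x_k+d_k$, $\alpha_{k+1}=\min\{\gamma_{\mathrm{inc}}\alpha_k,\alpha_{\max}\}$ (successful iteration); otherwise set $x_{k+1}=x_k$, $\alpha_{k+1}=\gamma_{\mathrm{dec}}\alpha_k$ (unsuccessful iteration). *)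

(* Defs.v *)
From HB Require Import structures.
From mathcomp Require Import all_boot all_order all_algebra.
From mathcomp Require Import all_classical all_reals all_analysis.
Set Implicit Arguments. Unset Strict Implicit. Unset Printing Implicit Defensive.
Import Order.TTheory GRing.Theory Num.Theory.
Import numFieldNormedType.Exports.
Local Open Scope classical_set_scope.
Local Open Scope ring_scope.

Section Defs.
Variable R : realType.
Variable n : nat.

Definition dotv (u v : 'rV[R]_n) : R := \sum_(i < n) u ord0 i * v ord0 i.
Definition enorm (v : 'rV[R]_n) : R := Num.sqrt (dotv v v).

Definition eball (y : 'rV[R]_n) (r : R) : set 'rV[R]_n :=
  [set z | enorm (z - y) <= r].

Definition polyhedron (m : nat) (a : 'I_m -> 'rV[R]_n) (b : 'I_m -> R)
  : set 'rV[R]_n := [set x | forall i, dotv (a i) x <= b i].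

(* criticality measure pi(x) = | min_{x+v in Omega, ||v||<=1} grad^T v |,
   the minimum (which exists) written as an infimum *)
Definition crit (Omega : set 'rV[R]_n) (g : 'rV[R]_n -> 'rV[R]_n)
  (x : 'rV[R]_n) : R :=
  `| inf [set dotv (g x) v | v in [set v | Omega (x + v) /\ enorm v <= 1]] |.

Definition pos_spanning (Omega : set 'rV[R]_n) (x : 'rV[R]_n) (alpha Lambda : R)
  (D : seq 'rV[R]_n) : Prop :=
  (forall d, d \in D -> Omega (x + d)) /\
  (forall v, Omega (x + v) -> enorm v <= alpha ->
     exists c : 'I_(size D) -> R,
       (forall i, 0 <= c i) /\
       v = \sum_(i < size D) c i *: nth 0 D i /\
       \sum_(i < size D) `|c i| <= Lambda).

Definition successful (Omega : set 'rV[R]_n) (f : 'rV[R]_n -> R) (sigma : R)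
  (xk : 'rV[R]_n) (alphak : R) (Dk : seq 'rV[R]_n) : Prop :=
  exists d, d \in Dk /\ Omega (xk + d) /\
    f (xk + d) < f xk - sigma / 2 * alphak ^+ 2.

Definition direct_search (Omega : set 'rV[R]_n) (f : 'rV[R]_n -> R)
  (sigma alpha_max gamma_dec gamma_inc : R)
  (x : nat -> 'rV[R]_n) (alpha : nat -> R) (D : nat -> seq 'rV[R]_n) : Prop :=
  Omega (x 0%N) /\ 0 < alpha_max /\ 0 < alpha 0%N <= alpha_max /\ 0 < sigma /\
  0 < gamma_dec < 1 /\ 1 < gamma_inc /\
  forall k : nat,
    (successful Omega f sigma (x k) (alpha k) (D k) ->
       (exists d, d \in D k /\ Omega (x k + d) /\
          f (x k + d) < f (x k) - sigma / 2 * alpha k ^+ 2 /\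
          x k.+1 = x k + d) /\
       alpha k.+1 = Num.min (gamma_inc * alpha k) alpha_max) /\
    (~ successful Omega f sigma (x k) (alpha k) (D k) ->
       x k.+1 = x k /\ alpha k.+1 = gamma_dec * alpha k).
End Defs.

(* Main.v *)
Require Import Defs.
From HB Require Import structures.
From mathcomp Require Import all_boot all_order all_algebra.
From mathcomp Require Import all_classical all_reals all_analysis.
Import Order.TTheory GRing.Theory Num.Theory.
From mathcomp Require Import ring lra.
Import numFieldNormedType.Exports.
Local Open Scope classical_set_scope.
Local Open Scope ring_scope.

Lemma line_deriv (R : realType) (n : nat) (f : 'rV[R]_n -> R) (g : 'rV[R]_n -> 'rV[R]_n) :
  (forall z, differentiable f z /\ forall v, 'd f z v = dotv (g z) v) ->
  forall x d (t : R), is_derive t 1 (fun t => f (x + t *: d)) (dotv (g (x + t *: d)) d).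
Proof.
move=> Hf x d t.
pose h := fun s : R => x + s *: d.
have dh : is_diff t h (fun s : R => 0 + s *: d).
  exact: is_diffD.
have dfh : differentiable (f \o h) t.
  apply: differentiable_comp; first exact: (@ex_diff _ _ _ _ _ _ _ dh).
  exact: (Hf _).1.
have -> : (fun t => f (x + t *: d)) = f \o h by [].
have -> : dotv (g (x + t *: d)) d = 'D_1 (f \o h) t.
  rewrite deriveE // diff_comp; last exact: (Hf _).1.
  2: exact: (@ex_diff _ _ _ _ _ _ _ dh).
  by rewrite /= diff_val /= add0r scale1r (Hf _).2.
apply: derivableP; exact: diff_derivable.
Qed.

Section Dot.
Variables (R : realType) (n : nat).
Implicit Types u v w : 'rV[R]_n.

Lemma dotvC u v : dotv u v = dotv v u.
Proof. by apply: eq_bigr => i _; rewrite mulrC. Qed.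

Lemma dotvDr u v w : dotv u (v + w) = dotv u v + dotv u w.
Proof. by rewrite /dotv -big_split; apply: eq_bigr => i _; rewrite mxE mulrDr. Qed.

Lemma dotvDl u v w : dotv (v + w) u = dotv v u + dotv w u.
Proof. by rewrite dotvC dotvDr !(dotvC u). Qed.

Lemma dotvZr u v (s : R) : dotv u (s *: v) = s * dotv u v.
Proof. by rewrite /dotv mulr_sumr; apply: eq_bigr => i _; rewrite mxE mulrCA. Qed.

Lemma dotvZl u v (s : R) : dotv (s *: v) u = s * dotv v u.
Proof. by rewrite dotvC dotvZr dotvC. Qed.

Lemma dotvNl u v : dotv (- v) u = - dotv v u.
Proof. by rewrite -scaleN1r dotvZl mulN1r. Qed.

Lemma dotvBl u v w : dotv (v - w) u = dotv v u - dotv w u.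
Proof. by rewrite dotvDl dotvNl. Qed.

Lemma dotv0r u : dotv u 0 = 0.
Proof. by rewrite /dotv big1 // => i _; rewrite mxE mulr0. Qed.

Lemma dotv_sumr u k (F : 'I_k -> 'rV[R]_n) :
  dotv u (\sum_(i < k) F i) = \sum_(i < k) dotv u (F i).
Proof.
rewrite /dotv exchange_big /=; apply: eq_bigr => j _.
by rewrite summxE mulr_sumr.
Qed.

Lemma dotv_ge0 v : 0 <= dotv v v.
Proof. by apply: sumr_ge0 => i _; rewrite -expr2 sqr_ge0. Qed.

Lemma enorm_ge0 v : 0 <= enorm v.
Proof. exact: sqrtr_ge0. Qed.

Lemma enorm_sq v : enorm v ^+ 2 = dotv v v.
Proof. by rewrite sqr_sqrtr // dotv_ge0. Qed.

Lemma enorm0 : enorm (0 : 'rV[R]_n) = 0.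
Proof. by rewrite /enorm dotv0r sqrtr0. Qed.

Lemma enormZ v (s : R) : enorm (s *: v) = `|s| * enorm v.
Proof.
rewrite /enorm dotvZl dotvZr mulrA -expr2 sqrtrM ?sqr_ge0 //.
by rewrite sqrtr_sqr.
Qed.

Lemma dotv_eq0 u v : dotv u u = 0 -> dotv u v = 0.
Proof.
move=> /eqP; rewrite psumr_eq0 => [H|i _]; last by rewrite -expr2 sqr_ge0.
rewrite /dotv big1 // => i _.
have /implyP := allP H i (mem_index_enum _).
by rewrite -expr2 sqrf_eq0 => /(_ isT) /eqP ->; rewrite mul0r.
Qed.

Lemma cauchy_schwarz u v : dotv u v <= enorm u * enorm v.
Proof.
set A := dotv u u; set B := dotv v v.
have A0 : 0 <= A by exact: dotv_ge0.
have B0 : 0 <= B by exact: dotv_ge0.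
have key : forall a b : R, 0 <= a ^+ 2 * A - 2 * a * b * dotv u v + b ^+ 2 * B.
  move=> a b.
  have -> : a ^+ 2 * A - 2 * a * b * dotv u v + b ^+ 2 * B =
     \sum_(i < n) (a * u ord0 i - b * v ord0 i) ^+ 2.
    rewrite /A /B /dotv -mulNr !mulr_sumr -!big_split /=.
    by apply: eq_bigr => i _; ring.
  by apply: sumr_ge0 => i _; rewrite sqr_ge0.
have := key (Num.sqrt B) (Num.sqrt A).
rewrite !sqr_sqrtr // => H.
rewrite /enorm -/A -/B.
have [A0'|Au] := eqVneq A 0.
  by rewrite dotv_eq0 // mulr_ge0 // sqrtr_ge0.
have [B0'|Bu] := eqVneq B 0.
  by rewrite dotvC dotv_eq0 // mulr_ge0 // sqrtr_ge0.
have sA : 0 < Num.sqrt A by rewrite sqrtr_gt0 lt0r Au.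
have sB : 0 < Num.sqrt B by rewrite sqrtr_gt0 lt0r Bu.
have eA : A = Num.sqrt A ^+ 2 by rewrite sqr_sqrtr.
have eB : B = Num.sqrt B ^+ 2 by rewrite sqr_sqrtr.
move: H; rewrite {1 3}eA {1 3}eB.
set p := Num.sqrt A; set q := Num.sqrt B; set d := dotv u v => H.
have pq : 0 < p * q by rewrite mulr_gt0.
nra.
Qed.
End Dot.

Lemma descent (R : realType) (n : nat) (f : 'rV[R]_n -> R) (g : 'rV[R]_n -> 'rV[R]_n) (L : R) :
  (forall z, differentiable f z /\ forall v, 'd f z v = dotv (g z) v) ->
  0 <= L ->
  (forall y z, enorm (g y - g z) <= L * enorm (y - z)) ->
  forall x d, f (x + d) <= f x + dotv (g x) d + L / 2 * dotv d d.
Proof.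
move=> Hf L0 HL x d.
set c := L / 2 * dotv d d.
pose phi := fun t : R => f (x + t *: d).
pose psi : R -> R := (phi - cst c * ((@idfun R) * (@idfun R)))%R.
have Hd : forall t : R, is_derive t 1 psi (dotv (g (x + t *: d)) d - c * (2 * t)).
  move=> t; apply: is_derive_eq.
    apply: is_deriveB; first exact: line_deriv.
  congr (_ - _); rewrite scaler0 addr0 /cst /idfun /=; by rewrite /GRing.scale /= !mulr1 mulr2n mulrDl !mul1r.
have [t tin E] : exists2 t, t \in `]0, 1[%R &
    psi 1 - psi 0 = (dotv (g (x + t *: d)) d - c * (2 * t)) * (1 - 0).
  apply: MVT; first exact: ltr01.
  apply: derivable_within_continuous => t _.
  by case: (Hd t).
have {E} : (f (x + 1 *: d) - c * (1 * 1)) - (f (x + 0 *: d) - c * (0 * 0)) =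
  (dotv (g (x + t *: d)) d - c * (2 * t)) * (1 - 0) := E.
rewrite scale0r addr0 scale1r !mulr1 mulr0 !subr0.
move=> E.
have Hg : dotv (g (x + t *: d)) d <= dotv (g x) d + L * t * dotv d d.
  have -> : g (x + t *: d) = g x + (g (x + t *: d) - g x) by rewrite [RHS]addrC subrK.
  rewrite dotvDl lerD2l.
  apply: (le_trans (@cauchy_schwarz R n _ _)).
  have := HL (x + t *: d) x; rewrite [x + _ - x]addrAC subrr add0r enormZ ger0_norm; last first.
    by move: tin; rewrite in_itv /= => /andP[/ltW].
  move=> H1; apply: (le_trans (ler_wpM2r (@enorm_ge0 R n _) H1)).
  by rewrite -enorm_sq expr2 !mulrA.
have t1' : t <= 1 by move: tin; rewrite in_itv /= => /andP[_ /ltW].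
have c0 : 0 <= dotv d d := @dotv_ge0 R n d.
have e2 : c * (2 * t) = L * t * dotv d d.
  by rewrite /c; field.
rewrite e2 in E.
lra.
Qed.

Theorem lemma4p6 (R : realType) (n m : nat)
  (a : 'I_m -> 'rV[R]_n) (b : 'I_m -> R)
  (f : 'rV[R]_n -> R) (g : 'rV[R]_n -> 'rV[R]_n) (L f_low : R)
  (Lambda d_max sigma alpha_max gamma_dec gamma_inc : R)
  (x : nat -> 'rV[R]_n) (alpha : nat -> R) (D : nat -> seq 'rV[R]_n) :
  (* Omega has nonempty interior *)
  (exists y r, 0 < r /\ eball y r `<=` polyhedron a b) ->
  (* f continuously differentiable with gradient g *)
  (forall z, differentiable f z /\ forall v, 'd f z v = dotv (g z) v) ->
  continuous g ->
  (* L-Lipschitz gradient *)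
  0 < L ->
  (forall y z, enorm (g y - g z) <= L * enorm (y - z)) ->
  (* bounded below on Omega *)
  (forall z, polyhedron a b z -> f_low <= f z) ->
  0 < Lambda -> 0 < d_max ->
  direct_search (polyhedron a b) f sigma alpha_max gamma_dec gamma_inc x alpha D ->
  (forall k, pos_spanning (polyhedron a b) (x k) (alpha k) Lambda (D k)) ->
  (forall k d, d \in D k -> enorm d <= d_max * alpha k) ->
  forall k : nat,
    crit (polyhedron a b) g (x k) != 0 ->
    alpha k < Num.min (2 * crit (polyhedron a b) g (x k) /
                         ((L * d_max ^+ 2 + sigma) * Lambda)) 1 ->
    successful (polyhedron a b) f sigma (x k) (alpha k) (D k).
Proof.
move=> _ Hf _ L0 HL _ Lam0 dm0 [Hx0 [Ham [/andP[Ha0 _] [Hs [/andP[Hgd0 _] [Hgi Hstep]]]]]]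
  Hspan Hdmax k.
have inv : forall j, polyhedron a b (x j) /\ 0 < alpha j.
  elim=> [|j [IHx IHa]]; first by split.
  case: (pselect (successful (polyhedron a b) f sigma (x j) (alpha j) (D j))) => Hsucc.
    have [[d [_ [Hd [_ ->]]]] ->] := (Hstep j).1 Hsucc.
    split => //; rewrite lt_min Ham andbT mulr_gt0 //.
    exact: lt_trans Hgi.
  have [-> ->] := (Hstep j).2 Hsucc.
  by split => //; rewrite mulr_gt0.
have [HX Ha] := inv k.
set X := x k in HX Hspan *; set al := alpha k in Ha *.
rewrite /crit.
set S := [set dotv (g X) v | v in _].
move=> Hpi Hal.
have S0 : S 0.
  exists 0; last exact: dotv0r.
  by split; [rewrite addr0 | rewrite enorm0].
have Slb : lbound S (- enorm (g X)).
  move=> s [v [_ Hv] <-].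
  rewrite lerNl -dotvNl.
  apply: (le_trans (@cauchy_schwarz R n _ _)).
  rewrite -scaleN1r enormZ normrN1 mul1r.
  by rewrite ler_piMr ?enorm_ge0.
have HinfS : has_inf S by split; [exists 0 | exists (- enorm (g X))].
have inf0 : inf S <= 0 by apply: ge_inf => //; exists (- enorm (g X)).
rewrite ler0_norm // in Hpi Hal *.
set pi := - inf S in Hpi Hal *.
have pi0 : 0 < pi by rewrite lt0r Hpi /pi oppr_ge0.
set Q := (L * d_max ^+ 2 + sigma) * Lambda.
have Q0 : 0 < Q by rewrite mulr_gt0 // addr_gt0 // mulr_gt0 // exprn_gt0.
move: Hal; rewrite lt_min => /andP[Hal1 Hal2].
have Hal1' : al * Q < 2 * pi by rewrite -ltr_pdivlMr.
have eps0 : 0 < pi - Q * al / 2 by lra.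
have [s [v [Hv Hv1] <-] Hs'] := inf_adherent eps0 HinfS.
have {Hs'} Hs' : dotv (g X) v < - (Q * al / 2) by have epi : pi = - inf S by []; lra.
set w := al *: v.
have Hw : polyhedron a b (X + w).
  move=> i; rewrite dotvDr dotvZr.
  have h1 := HX i; have h2 := Hv i; rewrite dotvDr in h2.
  nra.
have Hw1 : enorm w <= al.
  by rewrite enormZ ger0_norm ?(ltW Ha) //; have := @enorm_ge0 R n v; nra.
have [c [c0 [Ew Hc]]] := (Hspan k).2 w Hw Hw1.
set T := (L * d_max ^+ 2 + sigma) * al ^+ 2 / 2.
have T0 : 0 <= T.
  by rewrite /T mulr_ge0 // mulr_ge0 // ?addr_ge0 ?mulr_ge0 ?exprn_ge0 // ltW.
have [i Hi] : exists i : 'I_(size (D k)), dotv (g X) (nth 0 (D k) i) < - T.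
  case: (pselect (exists i : 'I_(size (D k)), dotv (g X) (nth 0 (D k) i) < - T)) => // Hn.
  exfalso.
  have H' : forall i : 'I_(size (D k)), - T <= dotv (g X) (nth 0 (D k) i).
    by move=> i; rewrite leNgt; apply/negP => h; apply: Hn; exists i.
  have E1 : dotv (g X) w = \sum_(i < size (D k)) c i * dotv (g X) (nth 0 (D k) i).
    by rewrite Ew dotv_sumr; apply: eq_bigr => j _; rewrite dotvZr.
  have E2 : \sum_(i < size (D k)) c i * (- T) <= dotv (g X) w.
    by rewrite E1; apply: ler_sum => j _; rewrite ler_wpM2l.
  rewrite -mulr_suml in E2.
  have E3 : \sum_(i < size (D k)) c i <= Lambda.
    by apply: le_trans Hc; apply: ler_sum => j _; rewrite ger0_norm.
  have E4 : dotv (g X) w = al * dotv (g X) v by rewrite dotvZr.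
  have E5 : T * Lambda = Q * al / 2 * al by rewrite /T /Q; field.
  have E6 : al * dotv (g X) v < al * - (Q * al / 2) by rewrite ltr_pM2l.
  have E7 : T * \sum_(i < size (D k)) c i <= T * Lambda by rewrite ler_wpM2l.
  lra.
set d := nth 0 (D k) i.
have dD : d \in D k by apply: mem_nth.
exists d; split => //; split; first exact: (Hspan k).1.
have Hdesc := @descent R n f g L Hf (ltW L0) HL X d.
have Hd1 := Hdmax k d dD.
have Hd2 : dotv d d <= d_max ^+ 2 * al ^+ 2.
  rewrite -enorm_sq -exprMn; apply: lerXn2r => //; rewrite ?nnegrE ?enorm_ge0 //.
  by rewrite mulr_ge0 // ltW.
have Hd3 : L / 2 * dotv d d <= L / 2 * (d_max ^+ 2 * al ^+ 2).
  by rewrite ler_wpM2l // divr_ge0 // ltW.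
have E8 : T = L / 2 * (d_max ^+ 2 * al ^+ 2) + sigma / 2 * al ^+ 2 by rewrite /T; field.
lra.
Qed.
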